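(* Let $(R,+,0,\times,1,\leq)$ be a partially ordered unitary (nonassociative) ring. For $x \in R$ define $x^{\to 0} = 1$, $x^{\to n+1} = x\, x^{\to n}$, and $x^{\leftarrow 0} = 1$, $x^{\leftarrow n+1} = x^{\leftarrow n} x$. Suppose that: (1) $1 \geq 0$; (2) $R$ is monotone $\sigma$-complete; (3) every $x \in\, ]0,1]$ has a right-sup-almost-inverse; (4) every $x \in\, ]0,1]$ has a left-sup-almost-inverse; (5) for every $x \in [0,1[$, $\inf_{n} x^{\to n} = 0$; (6) for every $x \in [0,1[$, $\inf_{n} x^{\leftarrow n} = 0$; (7) for every $x \in\, ]0,1[$, if $x$ has a left inverse $x_L^{-1}$ and a right inverse $x_R^{-1}$ then $x_L^{-1} = x_R^{-1}$. Then every $x \in\, ]0,1]$ is invertible, with inverse $\sum_{n \in \mathbb{N}} (1-x)^{\leftarrow n} := \sup_n \sum_{k=0}^n (1-x)^{\leftarrow k}$ (which equals $\sum_{n\in\mathbb{N}}(1-x)^{\to n} := \sup_n \sum_{k=0}^n (1-x)^{\to k}$).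
   Context: Rings are not assumed associative or commutative: a ring is an abelian group $(R,+,0)$ with a biadditive multiplication; unitary means there is a two-sided multiplicative unit $1$. A partially ordered ring is a ring with a partial order $\leq$ such that $y \geq z \Rightarrow x+y \geq x+z$ and $x \geq 0, y \geq 0 \Rightarrow xy \geq 0$. Write $x<y$ for $x \le y$, $x\ne y$; intervals such as $]0,1]$, $[0,1[$, $]0,1[$ are defined with respect to $\leq$. A poset is monotone $\sigma$-complete if every increasing sequence that is bounded above has a supremum. An element $x > 0$ has a right-sup-almost-inverse if there is $y > 0$ with $xy \geq 1$, and a left-sup-almost-inverse if there is $y > 0$ with $yx \geq 1$. A left (right) inverse of $x$ is $y$ with $yx = 1$ ($xy = 1$); $x$ is invertible if it has a two-sided inverse. *)

(* Defs.v *)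
(* Rings here are NOT assumed associative or commutative, so
   we cannot use MathComp's ringType; we take the additive abelian group from
   MathComp's zmodType and give the multiplication, unit and order explicitly. *)
From mathcomp Require Import all_boot all_algebra.
Set Implicit Arguments. Unset Strict Implicit. Unset Printing Implicit Defensive.
Import GRing.Theory.
Local Open Scope ring_scope.

Section PORing.
Variables (R : zmodType) (mul : R -> R -> R) (one : R) (le : R -> R -> Prop).

Definition is_po_unitary_ring : Prop :=
  (forall x y z, mul (x + y) z = mul x z + mul y z) /\
  (forall x y z, mul x (y + z) = mul x y + mul x z) /\
  (forall x, mul one x = x /\ mul x one = x) /\
  (forall x, le x x) /\
  (forall x y, le x y -> le y x -> x = y) /\
  (forall x y z, le x y -> le y z -> le x z) /\
  (forall x y z, le z y -> le (x + z) (x + y)) /\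
  (forall x y, le 0 x -> le 0 y -> le 0 (mul x y)).

Definition lt (x y : R) : Prop := le x y /\ x <> y.

Fixpoint powR (x : R) (n : nat) : R :=
  match n with O => one | S m => mul x (powR x m) end.
Fixpoint powL (x : R) (n : nat) : R :=
  match n with O => one | S m => mul (powL x m) x end.

Definition is_sup (S : R -> Prop) (s : R) : Prop :=
  (forall y, S y -> le y s) /\ (forall b, (forall y, S y -> le y b) -> le s b).
Definition is_inf (S : R -> Prop) (s : R) : Prop :=
  (forall y, S y -> le s y) /\ (forall b, (forall y, S y -> le b y) -> le b s).

Definition range_seq (u : nat -> R) : R -> Prop := fun y => exists n, y = u n.

Definition monotone_sigma_complete : Prop :=
  forall u : nat -> R, (forall n, le (u n) (u n.+1)) ->
    (exists b, forall n, le (u n) b) -> exists s, is_sup (range_seq u) s.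

Definition has_right_sup_almost_inverse (x : R) : Prop :=
  exists y, lt 0 y /\ le one (mul x y).
Definition has_left_sup_almost_inverse (x : R) : Prop :=
  exists y, lt 0 y /\ le one (mul y x).

End PORing.

(* Main.v *)
Require Import Defs.
From mathcomp Require Import all_boot all_algebra.
Import GRing.Theory.
Local Open Scope ring_scope.


Lemma core (R : zmodType) (mul : R -> R -> R) (one : R) (le : R -> R -> Prop)
  (HR : is_po_unitary_ring mul one le) (H1 : le 0 one)
  (H2 : monotone_sigma_complete le) (x : R) (Hx0 : le 0 x) (Hx1 : le x one)
  (w : R) (Hw0 : le 0 w) (Hw : le one (mul w x))
  (Hinf : is_inf le (range_seq (powL mul one (one - x))) 0) :
  exists s, is_sup le (range_seq (fun n => \sum_(k < n.+1) powL mul one (one - x) k)) s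
    /\ mul s x = one.
Proof.
case: HR => dl [dr [u1 [refl [anti [trans [tr pos]]]]]].
have mul0l : forall a, mul 0 a = 0.
  move=> a; have h := dl 0 0 a; rewrite addr0 in h.
  by apply: (addrI (mul 0 a)); rewrite -h addr0.
have mulBr : forall a b c, mul a (b - c) = mul a b - mul a c.
  move=> a b c; have h := dr a (b - c) c; rewrite subrK in h.
  by rewrite h addrK.
have le0sub : forall a b, le a b -> le 0 (b - a).
  move=> a b h; have := tr (- a) _ _ h; by rewrite addNr addrC.
have lesub0 : forall a b, le 0 (b - a) -> le a b.
  move=> a b h; have := tr a _ _ h; by rewrite addr0 addrC subrK.
have monor : forall a b c, le 0 a -> le b c -> le (mul b a) (mul c a).
  move=> a b c ha hbc; apply: lesub0.
  have := pos _ _ (le0sub _ _ hbc) ha.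
  have h := dl (c - b) b a; rewrite subrK in h.
  by rewrite h addrK.
have monol : forall a b c, le 0 a -> le b c -> le (mul a b) (mul a c).
  move=> a b c ha hbc; apply: lesub0; rewrite -mulBr; exact: pos ha (le0sub _ _ hbc).
have leaddr : forall a p, le 0 p -> le a (a + p).
  move=> a p hp; have := tr a _ _ hp; by rewrite addr0.
have leN : forall a b c, le a b -> le (c - b) (c - a).
  move=> a b c h; have := tr (c - b - a) _ _ h.
  by rewrite subrK addrAC subrK.
set y := one - x.
have hy : le 0 y by exact: le0sub.
have powpos : forall k, le 0 (powL mul one y k).
  elim=> [|k IH] //=; exact: pos.
set S := fun n => \sum_(k < n.+1) powL mul one y k.
have S0 : S 0%N = one by rewrite /S big_ord1.
have Sstep : forall n, S n.+1 = S n + powL mul one y n.+1.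
  by move=> n; rewrite /S big_ord_recr.
have distl : forall n (f : nat -> R) a, mul (\sum_(k < n) f k) a = \sum_(k < n) mul (f k) a.
  move=> n f a; elim: n => [|n IH]; first by rewrite !big_ord0 mul0l.
  by rewrite !big_ord_recr dl IH.
have Srec : forall n, S n.+1 = one + mul (S n) y.
  move=> n; rewrite /S big_ord_recl distl /=; congr (_ + _).
have K : forall v, le one (mul v x) -> le (one + mul v y) v.
  move=> v hv; have := tr (v - mul v x) _ _ hv.
  by rewrite subrK addrC /y mulBr (proj2 (u1 v)).
have Sinc : forall n, le (S n) (S n.+1).
  by move=> n; rewrite Sstep; apply: leaddr.
have Sbound : forall n, le (S n) w.
  elim=> [|n IH].
    rewrite S0; apply: trans (K _ Hw); apply: leaddr; exact: pos.
  rewrite Srec; apply: trans (K _ Hw).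
  by apply: tr; apply: monor.
have [s [sub sle]] := H2 S Sinc (ex_intro _ w Sbound).
have Sles : forall n, le (S n) s by move=> n; apply: sub; exists n.
have s0 : le 0 s by apply: trans H1 _; rewrite -S0; apply: Sles.
have xe : x = one - y by rewrite /y subKr.
have SX : forall n, mul (S n) x = one - powL mul one y n.+1.
  move=> n; have h := Srec n; rewrite Sstep in h.
  rewrite {1}xe mulBr (proj2 (u1 _)).
  have -> : mul (S n) y = S n + powL mul one y n.+1 - one.
    by rewrite h addrAC subrr add0r.
  by rewrite opprB addrCA opprD [S n + _]addrA subrr add0r.
have lower : forall k, le (one - mul s x) (powL mul one y k).
  case=> [|k].
    have := leN _ _ one (pos _ _ s0 Hx0); by rewrite subr0.
  have := leN _ _ one (monor x _ _ Hx0 (Sles k)); by rewrite SX subKr.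
have hsx : le one (mul s x).
  have := proj2 Hinf (one - mul s x) (fun z hz => ltac:(case: hz => k ->; exact: lower k)).
  move/le0sub; rewrite sub0r opprB; exact: lesub0.
have hi : le s (one + mul s y).
  apply: sle => z [[|k] ->].
    rewrite S0; exact: leaddr one _ (pos _ _ s0 hy).
  by rewrite Srec; apply: tr; apply: monor.
have hs : s = one + mul s y := anti _ _ hi (K s hsx).
exists s; split; first by [].
by rewrite xe mulBr (proj2 (u1 s)) {1}hs addrK.
Qed.

Lemma flip_ring (R : zmodType) (mul : R -> R -> R) (one : R) (le : R -> R -> Prop) :
  is_po_unitary_ring mul one le -> is_po_unitary_ring (fun a b => mul b a) one le.
Proof.
case=> dl [dr [u1 [refl [anti [trans [tr pos]]]]]].
split; first by move=> *; apply: dr.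
split; first by move=> *; apply: dl.
split; first by move=> z; case: (u1 z).
do 4 (split; first by []).
by move=> a b ha hb; apply: pos.
Qed.

Lemma powR_flip (R : zmodType) (mul : R -> R -> R) (one x : R) n :
  powR mul one x n = powL (fun a b => mul b a) one x n.
Proof. by elim: n => //= n ->. Qed.

Theorem mainTheorem12 (R : zmodType) (mul : R -> R -> R) (one : R)
  (le : R -> R -> Prop)
  (HR : is_po_unitary_ring mul one le)
  (H1 : le 0 one)
  (H2 : monotone_sigma_complete le)
  (H3 : forall x, lt le 0 x -> le x one -> has_right_sup_almost_inverse mul one le x)
  (H4 : forall x, lt le 0 x -> le x one -> has_left_sup_almost_inverse mul one le x)
  (H5 : forall x, le 0 x -> lt le x one -> is_inf le (range_seq (powR mul one x)) 0)
  (H6 : forall x, le 0 x -> lt le x one -> is_inf le (range_seq (powL mul one x)) 0)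
  (H7 : forall x, lt le 0 x -> lt le x one ->
          forall xl xr, mul xl x = one -> mul x xr = one -> xl = xr) :
  forall x, lt le 0 x -> le x one ->
    exists s,
      is_sup le (range_seq (fun n => \sum_(k < n.+1) powL mul one (one - x) k)) s /\
      is_sup le (range_seq (fun n => \sum_(k < n.+1) powR mul one (one - x) k)) s /\
      mul s x = one /\ mul x s = one.
Proof.
move=> x [Hx0 Hx0n] Hx1.
have HR' := HR.
case: HR' => dl [dr [u1 [refl [anti [trans [tr pos]]]]]].
have hy0 : le 0 (one - x).
  have := tr (- x) _ _ Hx1; by rewrite addNr addrC.
have hy1 : lt le (one - x) one.
  split.
    have := tr (- x) _ _ Hx0; rewrite addr0 addNr => h.
    by have := tr one _ _ h; rewrite addr0.
  move=> e; apply: Hx0n.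
  by rewrite -(subKr one x) e subrr.
have [w [[hw0 _] hw]] := H4 x (conj Hx0 Hx0n) Hx1.
have [s [ss hs]] := @core _ _ _ _ HR H1 H2 _ Hx0 Hx1 _ hw0 hw (H6 _ hy0 hy1).
have [z [[hz0 _] hz]] := H3 x (conj Hx0 Hx0n) Hx1.
have inf' : is_inf le (range_seq (powL (fun a b => mul b a) one (one - x))) 0.
  have [i1 i2] := H5 _ hy0 hy1.
  split.
    by move=> v [k ->]; apply: i1; exists k; rewrite powR_flip.
  by move=> b hb; apply: i2 => v [k ->]; apply: hb; exists k; rewrite powR_flip.
have [t [ts ht]] := @core _ _ _ _ (@flip_ring _ _ _ _ HR) H1 H2 _ Hx0 Hx1 _ hz0 hz inf'.
have ts' : is_sup le (range_seq (fun n => \sum_(k < n.+1) powR mul one (one - x) k)) t.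
  have e : forall n, \sum_(k < n.+1) powR mul one (one - x) k =
           \sum_(k < n.+1) powL (fun a b => mul b a) one (one - x) k.
    by move=> n; apply: eq_bigr => k _; rewrite powR_flip.
  have [t1 t2] := ts; split.
    by move=> v [k ->]; apply: t1; exists k; rewrite e.
  by move=> b hb; apply: t2 => v [k ->]; apply: hb; exists k; rewrite e.
have st : s = t.
  case: (boolP (x == one)) => [/eqP xe | xn].
    have hs' := hs; rewrite xe (proj2 (u1 s)) in hs'.
    have ht' := ht; rewrite /= xe (proj1 (u1 t)) in ht'.
    by rewrite hs' ht'.
  by apply: (H7 x (conj Hx0 Hx0n) (conj Hx1 (fun e => (negP xn) (introT eqP e)))).
exists s; split; first exact: ss.
split; first by rewrite st.
split; first exact: hs.
by rewrite st.
Qed.
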